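(* Let $y>0$ and $\mu_0\in(-1,0)$. If $x>0$ and $$x\ge L_{\mu_0}(y)=\frac{\sqrt{(y-\mu_0-2)^2+4y}-y-\mu_0}{2y},$$ then $Q_\mu(x,y)>0$ for all $\mu\ge\mu_0$.
   Context: For real $\mu$, $x>0$, $y\ge 0$: $Q_{\mu}(x,y)=x^{\frac12(1-\mu)}\int_y^{\infty} t^{\frac12(\mu-1)}e^{-t-x}I_{\mu-1}(2\sqrt{xt})\,dt$, where $I_\nu$ is the modified Bessel function of the first kind. *)

(* Defs.v *)
From Stdlib Require Import Reals Arith.
From Coquelicot Require Import Coquelicot.
Open Scope R_scope.

Definition Gamma_pos (s : R) : R :=
  RInt_gen (fun t => Rpower t (s - 1) * exp (- t)) (at_right 0) (Rbar_locally p_infty).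

Fixpoint rising (s : R) (n : nat) : R :=
  match n with
  | O => 1
  | S k => rising s k * (s + INR k)
  end.

(* Reciprocal Gamma function 1/Gamma(s) on all of R (entire; zero at
   s = 0, -1, -2, ...), via 1/Gamma(s) = s(s+1)...(s+n-1)/Gamma(s+n)
   with n chosen so that s + n > 0. *)
Definition rgamma (s : R) : R :=
  let n := Z.to_nat (up (- s)) in
  rising s n / Gamma_pos (s + INR n).

Definition BesselI (nu z : R) : R :=
  Rpower (z / 2) nu *
  Series (fun k => (z / 2) ^ (2 * k) / INR (Factorial.fact k) * rgamma (INR k + nu + 1)).

Definition MarcumQ (mu x y : R) : R :=
  Rpower x ((1 - mu) / 2) *
  RInt_gen (fun t => Rpower t ((mu - 1) / 2) * exp (- t - x)
                     * BesselI (mu - 1) (2 * sqrt (x * t)))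
           (at_point y) (Rbar_locally p_infty).

Definition L_bound (mu0 y : R) : R :=
  (sqrt ((y - mu0 - 2) ^ 2 + 4 * y) - y - mu0) / (2 * y).

(* Main.v *)
Require Import Defs.
From Stdlib Require Import Reals Lra Lia Classical.
From Coquelicot Require Import Coquelicot.
Open Scope R_scope.

Lemma ballR (x e y : R) : ball x e y <-> Rabs (y - x) < e.
Proof. unfold ball; simpl; unfold AbsRing_ball, abs, minus, plus, opp; simpl. tauto. Qed.

Lemma RInt_sub_le (g : R -> R) a c d b :
  a <= c -> c <= d -> d <= b ->
  (forall u v, a <= u -> u <= b -> a <= v -> v <= b -> ex_RInt g u v) ->
  (forall t, a <= t <= b -> 0 <= g t) ->
  RInt g c d <= RInt g a b.
Proof.
  intros h1 h2 h3 Hex Hpos.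
  rewrite <- (RInt_Chasles g a c b) by (apply Hex; lra).
  rewrite <- (RInt_Chasles g c d b) by (apply Hex; lra).
  assert (0 <= RInt g a c) by (apply RInt_ge_0; [lra| apply Hex; lra| intros; apply Hpos; lra]).
  assert (0 <= RInt g d b) by (apply RInt_ge_0; [lra| apply Hex; lra| intros; apply Hpos; lra]).
  change plus with Rplus. lra.
Qed.

Lemma lub_approx (E : R -> Prop) l eps : is_lub E l -> 0 < eps -> exists v, E v /\ l - eps < v.
Proof.
  intros [Hub Hl] He. apply NNPP; intro H.
  assert (is_upper_bound E (l - eps)).
  { intros v Hv. destruct (Rle_lt_dec v (l - eps)); auto. exfalso; apply H; exists v; auto. }
  specialize (Hl _ H0). lra.
Qed.

Lemma improper_right0 (g : R -> R) (M : R) :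
  (forall t, 0 < t -> 0 <= g t) ->
  (forall u v, 0 < u -> 0 < v -> ex_RInt g u v) ->
  (forall u v, 0 < u -> u <= v -> RInt g u v <= M) ->
  exists l, is_RInt_gen g (at_right 0) (Rbar_locally p_infty) l /\
            forall u v, 0 < u -> u <= v -> RInt g u v <= l.
Proof.
  intros Hpos Hex HM.
  set (E := fun v => exists u w, 0 < u /\ u <= w /\ v = RInt g u w).
  assert (Hb : bound E). { exists M. intros v (u & w & h1 & h2 & ->). apply HM; lra. }
  assert (Hne : exists v, E v). { exists (RInt g 1 1). exists 1, 1. repeat split; lra. }
  destruct (completeness E Hb Hne) as [l Hl].
  assert (Hle : forall u v, 0 < u -> u <= v -> RInt g u v <= l).
  { intros u v h1 h2. apply (proj1 Hl). exists u, v. auto. }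
  exists l; split; auto.
  intros P [eps HP].
  destruct (lub_approx E l eps Hl (cond_pos eps)) as (v & (u0 & w0 & h1 & h2 & ->) & hv).
  apply (Filter_prod _ _ _ (fun a => 0 < a < u0) (fun b => w0 < b)).
  - exists (mkposreal u0 h1). intros a Ha Ha0. apply ballR in Ha. simpl in Ha.
    apply Rabs_lt_between in Ha. unfold minus, plus, opp in Ha; simpl in Ha. lra.
  - exists w0. auto.
  - intros a b Ha Hb'. simpl. exists (RInt g a b). split.
    + apply (@RInt_correct R_CompleteNormedModule), Hex; lra.
    + apply HP, ballR.
      assert (RInt g u0 w0 <= RInt g a b).
      { apply RInt_sub_le; try lra. intros; apply Hex; lra. intros; apply Hpos; lra. }
      assert (RInt g a b <= l) by (apply Hle; lra).
      apply Rabs_lt_between; lra.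
Qed.

Lemma improper_point (g : R -> R) (y M : R) :
  (forall t, y <= t -> 0 <= g t) ->
  (forall u v, y <= u -> y <= v -> ex_RInt g u v) ->
  (forall v, y <= v -> RInt g y v <= M) ->
  exists l, is_RInt_gen g (at_point y) (Rbar_locally p_infty) l /\
            forall v, y <= v -> RInt g y v <= l.
Proof.
  intros Hpos Hex HM.
  set (E := fun v => exists w, y <= w /\ v = RInt g y w).
  assert (Hb : bound E). { exists M. intros v (w & h2 & ->). apply HM; lra. }
  assert (Hne : exists v, E v). { exists (RInt g y y). exists y. split; lra. }
  destruct (completeness E Hb Hne) as [l Hl].
  assert (Hle : forall v, y <= v -> RInt g y v <= l).
  { intros v h2. apply (proj1 Hl). exists v. auto. }
  exists l; split; auto.
  intros P [eps HP].
  destruct (lub_approx E l eps Hl (cond_pos eps)) as (v & (w0 & h2 & ->) & hv).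
  apply (Filter_prod _ _ _ (fun a => a = y) (fun b => w0 < b)).
  - reflexivity.
  - exists w0. auto.
  - intros a b Ha Hb'. subst a. simpl. exists (RInt g y b). split.
    + apply (@RInt_correct R_CompleteNormedModule), Hex; lra.
    + apply HP, ballR.
      assert (RInt g y w0 <= RInt g y b).
      { apply RInt_sub_le; try lra. intros; apply Hex; lra. intros; apply Hpos; lra. }
      assert (RInt g y b <= l) by (apply Hle; lra).
      apply Rabs_lt_between; lra.
Qed.

Lemma exR_cont (f : R -> R) a b : (forall z, Rmin a b <= z <= Rmax a b -> continuous f z) -> ex_RInt f a b.
Proof. apply (@ex_RInt_continuous R_CompleteNormedModule). Qed.

Lemma exp_mono_le a b : a <= b -> exp a <= exp b.
Proof. intros H. destruct (Rle_lt_or_eq_dec a b H) as [h|h]. left; apply exp_increasing; auto. right; subst; auto. Qed.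

Definition gam (s : R) := fun t => Rpower t (s - 1) * exp (- t).

Lemma Rpower_cont p t : 0 < t -> continuous (fun t => Rpower t p) t.
Proof. intros. apply (@ex_derive_continuous R_AbsRing R_NormedModule). unfold Rpower. auto_derive. auto. Qed.

Lemma gam_cont s t : 0 < t -> continuous (gam s) t.
Proof. intros. apply (@ex_derive_continuous R_AbsRing R_NormedModule). unfold gam, Rpower. auto_derive. auto. Qed.

Lemma gam_pos s t : 0 < t -> 0 < gam s t.
Proof. intros. unfold gam, Rpower. apply Rmult_lt_0_compat; apply exp_pos. Qed.

Lemma gam_ex s u v : 0 < u -> 0 < v -> ex_RInt (gam s) u v.
Proof.
  intros. apply exR_cont. intros z Hz. apply gam_cont.
  assert (0 < Rmin u v) by (apply Rmin_glb_lt; auto). lra.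
Qed.

Lemma ln_le_sub1 z : 0 < z -> ln z <= z - 1.
Proof. intros. pose proof (exp_ineq1_le (ln z)). rewrite exp_ln in H0; lra. Qed.

Lemma gam_b1 s u : 0 < s -> 0 < u <= 1 -> RInt (gam s) u 1 <= 1 / s.
Proof.
  intros Hs Hu.
  assert (Hd : is_RInt (fun t => Rpower t (s - 1)) u 1
                 (minus ((fun t => Rpower t s / s) 1) ((fun t => Rpower t s / s) u))).
  { apply (@is_RInt_derive R_CompleteNormedModule (fun t => Rpower t s / s)).
    - intros x Hx. rewrite Rmin_left in Hx by lra. unfold Rpower. auto_derive. lra.
      replace ((s - 1) * ln x) with (s * ln x + - ln x) by ring.
      rewrite exp_plus, exp_Ropp, exp_ln by lra. field. lra.
    - intros x Hx. rewrite Rmin_left in Hx by lra. apply Rpower_cont. lra. }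
  apply (@is_RInt_unique R_CompleteNormedModule) in Hd.
  apply Rle_trans with (RInt (fun t => Rpower t (s - 1)) u 1).
  - apply RInt_le; try lra. apply gam_ex; lra.
    apply exR_cont. intros z Hz. rewrite Rmin_left in Hz by lra. apply Rpower_cont. lra.
    intros x Hx. unfold gam. rewrite <- (Rmult_1_r (Rpower x (s-1))) at 2.
    apply Rmult_le_compat_l. unfold Rpower; left; apply exp_pos.
    rewrite <- exp_0. left. apply exp_increasing. lra.
  - rewrite Hd. unfold minus, plus, opp; simpl.
    assert (0 < Rpower u s) by (unfold Rpower; apply exp_pos).
    unfold Rpower at 1. rewrite ln_1, Rmult_0_r, exp_0.
    apply Rmult_le_reg_r with s; auto. unfold Rdiv. field_simplify; lra.
Qed.

Lemma gam_pt_bound s : exists C, forall t, 1 <= t -> gam s t <= exp C * exp (- t / 2).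
Proof.
  set (c := Rabs (s - 1) + 1).
  assert (Hc : 0 < c) by (unfold c; pose proof (Rabs_pos (s-1)); lra).
  exists (c * ln (2 * c) - c). intros t Ht.
  unfold gam, Rpower. rewrite <- exp_plus, <- exp_plus.
  assert (H0 : 0 <= ln t) by (rewrite <- ln_1; apply ln_le; lra).
  assert (H1 : (s - 1) * ln t <= c * ln t).
  { apply Rmult_le_compat_r; auto. unfold c. pose proof (Rle_abs (s-1)). lra. }
  assert (H2 : ln (t / (2 * c)) <= t / (2 * c) - 1).
  { apply ln_le_sub1. apply Rdiv_lt_0_compat; lra. }
  rewrite ln_div in H2 by lra.
  assert (H3 : c * (ln t - ln (2 * c)) <= c * (t / (2 * c) - 1)) by (apply Rmult_le_compat_l; lra).
  assert (H4: c * (t / (2 * c) - 1) = t / 2 - c) by (field; lra).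
  apply exp_mono_le. nra.
Qed.

Lemma gam_b2 s : exists K, forall v, 1 <= v -> RInt (gam s) 1 v <= K.
Proof.
  destruct (gam_pt_bound s) as [C HC]. exists (2 * exp C). intros v Hv.
  assert (Hd : is_RInt (fun t => exp C * exp (- t / 2)) 1 v
                 (minus ((fun t => - 2 * exp C * exp (- t / 2)) v) ((fun t => - 2 * exp C * exp (- t / 2)) 1))).
  { apply (@is_RInt_derive R_CompleteNormedModule (fun t => - 2 * exp C * exp (- t / 2))).
    - intros x Hx. auto_derive. auto. unfold Rdiv. field.
    - intros x Hx. apply (@ex_derive_continuous R_AbsRing R_NormedModule). auto_derive. auto. }
  apply (@is_RInt_unique R_CompleteNormedModule) in Hd.
  apply Rle_trans with (RInt (fun t => exp C * exp (- t / 2)) 1 v).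
  - apply RInt_le; auto. apply gam_ex; lra.
    apply exR_cont. intros z Hz. apply (@ex_derive_continuous R_AbsRing R_NormedModule). auto_derive. auto.
    intros x Hx. apply HC. lra.
  - rewrite Hd. unfold minus, plus, opp; simpl.
    assert (0 < exp (- v / 2)) by apply exp_pos.
    assert (exp (- (1) / 2) <= 1) by (apply Rle_trans with (exp 0); [apply exp_mono_le; lra | rewrite exp_0; lra]).
    assert (0 < exp C) by apply exp_pos. nra.
Qed.

Lemma gam_bound s : 0 < s -> exists M, forall u v, 0 < u -> u <= v -> RInt (gam s) u v <= M.
Proof.
  intros Hs. destruct (gam_b2 s) as [K HK]. exists (1 / s + K). intros u v Hu Huv.
  set (u' := Rmin u 1). set (v' := Rmax v 1).
  assert (0 < u') by (apply Rmin_glb_lt; lra).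
  assert (u' <= 1) by apply Rmin_r. assert (u' <= u) by apply Rmin_l.
  assert (1 <= v') by apply Rmax_r. assert (v <= v') by apply Rmax_l.
  apply Rle_trans with (RInt (gam s) u' v').
  - apply RInt_sub_le; try lra. intros; apply gam_ex; lra. intros; left; apply gam_pos; lra.
  - rewrite <- (RInt_Chasles (gam s) u' 1 v') by (apply gam_ex; lra).
    change plus with Rplus.
    pose proof (gam_b1 s u' Hs ltac:(lra)). pose proof (HK v' ltac:(lra)). lra.
Qed.

Lemma Gamma_facts s : 0 < s ->
  (forall u v, 0 < u -> u <= v -> RInt (gam s) u v <= Gamma_pos s) /\ exp (-2) / 2 <= Gamma_pos s.
Proof.
  intros Hs. destruct (gam_bound s Hs) as [M HM].
  destruct (improper_right0 (gam s) M) as (l & Hl & Hle); auto.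
  intros; left; apply gam_pos; auto. intros; apply gam_ex; auto.
  assert (E : Gamma_pos s = l).
  { unfold Gamma_pos. apply (@is_RInt_gen_unique R_CompleteNormedModule); auto.
    apply Proper_StrongProper, at_right_proper_filter.
    apply Proper_StrongProper, Rbar_locally_filter. }
  rewrite E. split; auto.
  apply Rle_trans with (RInt (gam s) 1 2); [|apply Hle; lra].
  apply Rle_trans with (RInt (fun _ => exp (-2) / 2) 1 2).
  - rewrite RInt_const. unfold scal; simpl; unfold mult; simpl. lra.
  - apply RInt_le; try lra. apply exR_cont; intros; apply continuous_const. apply gam_ex; lra.
    intros t Ht. unfold gam, Rpower.
    assert (exp (- 2) <= exp (- t)) by (apply exp_mono_le; lra).
    assert (/ 2 <= exp ((s - 1) * ln t)).
    { assert (0 <= ln t) by (rewrite <- ln_1; apply ln_le; lra).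
      assert (ln t <= ln 2) by (apply ln_le; lra).
      replace (/ 2) with (exp (- ln 2)). apply exp_mono_le. nra.
      rewrite exp_Ropp, exp_ln; lra. }
    pose proof (exp_pos (-2)). nra.
Qed.

Lemma rgamma_pos s : 0 < s -> rgamma s = / Gamma_pos s.
Proof.
  intros Hs. unfold rgamma.
  destruct (archimed (- s)) as [h1 h2].
  assert (Hz : (up (- s) <= 0)%Z).
  { assert (IZR (up (- s)) < 1) by lra. apply lt_IZR in H. lia. }
  replace (Z.to_nat (up (- s))) with 0%nat by lia.
  simpl. rewrite Rplus_0_r. unfold Rdiv. ring.
Qed.

Lemma rgamma_neg s : -1 < s <= 0 -> rgamma s = s / Gamma_pos (s + 1).
Proof.
  intros Hs. unfold rgamma.
  destruct (archimed (- s)) as [h1 h2].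
  assert (Hz : up (- s) = 1%Z).
  { assert (IZR (up (- s)) < 2) by lra. apply lt_IZR in H.
    assert (0 < IZR (up (- s))) by lra. apply lt_IZR in H0. lia. }
  rewrite Hz. simpl. f_equal. ring.
Qed.

Lemma Gamma_pos_gt0 s : 0 < s -> 0 < Gamma_pos s.
Proof. intros. destruct (Gamma_facts s H) as [_ h]. pose proof (exp_pos (-2)). lra. Qed.

Definition cc (mu : R) (k : nat) := rgamma (INR k + (mu - 1) + 1) / INR (Factorial.fact k).

Lemma fact_pos k : 0 < INR (Factorial.fact k).
Proof. apply lt_0_INR. apply Factorial.lt_O_fact. Qed.

Lemma cc_ge1 mu k : -1 < mu -> (1 <= k)%nat -> cc mu k = / (INR (Factorial.fact k) * Gamma_pos (INR k + mu)).
Proof.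
  intros Hm Hk. unfold cc. apply le_INR in Hk. simpl in Hk.
  rewrite rgamma_pos by lra.
  replace (INR k + (mu - 1) + 1) with (INR k + mu) by ring.
  pose proof (fact_pos k). pose proof (Gamma_pos_gt0 (INR k + mu) ltac:(lra)).
  field. split; lra.
Qed.

Lemma cc_pos mu k : -1 < mu -> (1 <= k)%nat -> 0 < cc mu k.
Proof.
  intros Hm Hk. rewrite cc_ge1 by auto. apply le_INR in Hk. simpl in Hk.
  pose proof (fact_pos k). pose proof (Gamma_pos_gt0 (INR k + mu) ltac:(lra)).
  apply Rinv_0_lt_compat. nra.
Qed.

Lemma cc0_pos mu : 0 < mu -> 0 < cc mu 0.
Proof.
  intros Hm. unfold cc. simpl. rewrite rgamma_pos by lra.
  replace (0 + (mu - 1) + 1) with mu by ring.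
  pose proof (Gamma_pos_gt0 mu Hm). apply Rdiv_lt_0_compat; [apply Rinv_0_lt_compat|]; lra.
Qed.

Lemma cc0_neg mu : -1 < mu <= 0 -> cc mu 0 = mu / Gamma_pos (mu + 1).
Proof.
  intros Hm. unfold cc. simpl. replace (0 + (mu - 1) + 1) with mu by ring.
  rewrite rgamma_neg by lra. field.
  pose proof (Gamma_pos_gt0 (mu+1) ltac:(lra)). lra.
Qed.

Lemma cc1 mu : -1 < mu -> cc mu 1 = / Gamma_pos (mu + 1).
Proof.
  intros Hm. rewrite cc_ge1 by auto. simpl. replace (1 + mu) with (mu + 1) by ring. field.
  pose proof (Gamma_pos_gt0 (mu+1) ltac:(lra)). lra.
Qed.

Lemma cc_bound mu k : -1 < mu -> Rabs (cc mu k) <= (Rabs (rgamma mu) + 2 * exp 2) / INR (Factorial.fact k).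
Proof.
  intros Hm. pose proof (fact_pos k). pose proof (exp_pos 2).
  destruct k as [|k].
  - unfold cc. simpl. replace (0 + (mu - 1) + 1) with mu by ring.
    rewrite Rabs_div, Rabs_R1 by lra. unfold Rdiv. rewrite Rinv_1. lra.
  - rewrite cc_ge1 by (auto; lia).
    assert (Hk : 0 < INR (S k) + mu) by (rewrite S_INR; pose proof (pos_INR k); lra).
    destruct (Gamma_facts _ Hk) as [_ HG].
    pose proof (Gamma_pos_gt0 _ Hk).
    rewrite Rabs_pos_eq by (left; apply Rinv_0_lt_compat; nra).
    rewrite Rinv_mult. unfold Rdiv.
    assert (/ Gamma_pos (INR (S k) + mu) <= 2 * exp 2).
    { apply Rmult_le_reg_l with (Gamma_pos (INR (S k) + mu)); auto.
      rewrite Rinv_r by lra.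
      assert (exp (-2) * exp 2 = 1) by (rewrite <- exp_plus; replace (-2 + 2) with 0 by ring; apply exp_0).
      nra. }
    assert (0 < / INR (Factorial.fact (S k))) by (apply Rinv_0_lt_compat; auto).
    pose proof (Rabs_pos (rgamma mu)). nra.
Qed.

Lemma cc_radius mu w : -1 < mu -> Rbar_lt (Rabs w) (CV_radius (cc mu)).
Proof.
  intros Hm. set (r := Rabs w + 1). set (A := Rabs (rgamma mu) + 2 * exp 2).
  assert (Hd : CV_disk (cc mu) r).
  { unfold CV_disk.
    apply (@ex_series_le R_AbsRing R_CompleteNormedModule) with (fun n => A * (r ^ n * / INR (Factorial.fact n))).
    - intros n. change norm with Rabs; simpl. rewrite Rabs_pos_eq by apply Rabs_pos. rewrite Rabs_mult.
      rewrite (Rabs_pos_eq (r ^ n)) by (apply pow_le; unfold r; pose proof (Rabs_pos w); lra).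
      pose proof (cc_bound mu n Hm). pose proof (fact_pos n).
      assert (0 <= r ^ n) by (apply pow_le; unfold r; pose proof (Rabs_pos w); lra).
      unfold Rdiv in H. fold A in H. nra.
    - apply (@ex_series_scal_l R_AbsRing R_NormedModule A (fun n => r ^ n * / INR (Factorial.fact n))).
      exists (exp r). apply is_exp_Reals. }
  assert (Rbar_le r (CV_radius (cc mu))).
  { apply (proj1 (Lub_Rbar_correct (CV_disk (cc mu)))). auto. }
  apply Rbar_lt_le_trans with r; auto. simpl. unfold r; lra.
Qed.

Lemma Series_nonneg a : (forall n, 0 <= a n) -> ex_series a -> 0 <= Series a.
Proof.
  intros H Hex.
  assert (E : Series (fun _ => 0) = 0).
  { rewrite (Series_ext (fun _ => 0) (fun n => 0 * 0)) by (intros; ring).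
    rewrite Series_scal_l. ring. }
  rewrite <- E. apply Series_le; auto. intros; split; [lra|auto].
Qed.

Lemma PS_eq mu w : PSeries (cc mu) w = Series (fun k => cc mu k * w ^ k).
Proof. reflexivity. Qed.

Lemma PS_ex mu w : -1 < mu -> ex_series (fun k => cc mu k * w ^ k).
Proof.
  intros. pose proof (CV_radius_inside (cc mu) w (cc_radius mu w H)) as h.
  apply (@ex_series_ext R_AbsRing R_NormedModule) with (2 := h).
  intros n. rewrite pow_n_pow. unfold scal; simpl; unfold mult; simpl. ring.
Qed.

Lemma PS_pos mu w : -1 < mu -> 0 < w -> (0 < mu \/ - mu <= w) -> 0 < PSeries (cc mu) w.
Proof.
  intros Hm Hw Hc. rewrite PS_eq.
  pose proof (PS_ex mu w Hm) as Hex.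
  rewrite (Series_incr_n _ 3) by (auto; lia). simpl.
  assert (0 <= Series (fun k => cc mu (3 + k) * w ^ (3 + k))).
  { apply Series_nonneg. intros n. apply Rmult_le_pos. left; apply cc_pos; auto; lia. apply pow_le; lra.
    apply (ex_series_incr_n (fun k => cc mu k * w ^ k) 3); auto. }
  pose proof (cc_pos mu 2 Hm ltac:(lia)). pose proof (cc_pos mu 1 Hm ltac:(lia)).
  assert (0 < cc mu 2 * (w * (w * 1))) by (apply Rmult_lt_0_compat; nra).
  destruct (Rlt_or_le 0 mu) as [Hp|Hn].
  - pose proof (cc0_pos mu Hp). simpl in *; nra.
  - assert (0 <= cc mu 0 * 1 + cc mu 1 * (w * 1)).
    { rewrite cc0_neg, cc1 by lra. pose proof (Gamma_pos_gt0 (mu + 1) ltac:(lra)).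
      destruct Hc as [Hc|Hc]; [lra|].
      replace (mu / Gamma_pos (mu + 1) * 1 + / Gamma_pos (mu + 1) * (w * 1))
        with ((mu + w) * / Gamma_pos (mu + 1)) by (field; lra).
      apply Rmult_le_pos. lra. left; apply Rinv_0_lt_compat; auto. }
    simpl in H. lra.
Qed.

Lemma PS_cont mu w : -1 < mu -> continuous (PSeries (cc mu)) w.
Proof. intros. apply continuity_pt_filterlim, PSeries_continuity, cc_radius; auto. Qed.

Lemma PS_split mu w N : -1 < mu ->
  PSeries (cc mu) w = sum_f_R0 (fun k => cc mu k * w ^ k) N + Series (fun k => cc mu (S N + k) * w ^ (S N + k)).
Proof. intros. rewrite PS_eq. rewrite (Series_incr_n _ (S N)); auto. lia. apply PS_ex; auto. Qed.

Lemma tail_mono mu w B N : -1 < mu -> 0 <= w <= B ->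
  Series (fun k => cc mu (S N + k) * w ^ (S N + k)) <= Series (fun k => cc mu (S N + k) * B ^ (S N + k)).
Proof.
  intros Hm Hw. apply Series_le.
  - intros n. pose proof (cc_pos mu (S N + n) Hm ltac:(lia)). split.
    apply Rmult_le_pos; [lra|apply pow_le; lra].
    apply Rmult_le_compat_l; [lra|]. apply pow_incr; lra.
  - apply (ex_series_incr_n (fun k => cc mu k * B ^ k) (S N)). apply PS_ex; auto.
Qed.

Lemma tail_nonneg mu B N : -1 < mu -> 0 <= B -> 0 <= Series (fun k => cc mu (S N + k) * B ^ (S N + k)).
Proof.
  intros. apply Series_nonneg. intros n. pose proof (cc_pos mu (S N + n) H ltac:(lia)).
  apply Rmult_le_pos; [lra|apply pow_le; lra].
  apply (ex_series_incr_n (fun k => cc mu k * B ^ k) (S N)). apply PS_ex; auto.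
Qed.

Lemma tail_small mu B eps : -1 < mu -> 0 < eps ->
  exists N, Series (fun k => cc mu (S N + k) * B ^ (S N + k)) < eps.
Proof.
  intros Hm He. pose proof (Series_correct _ (PS_ex mu B Hm)) as Hs.
  destruct (Hs (ball (Series (fun k => cc mu k * B ^ k)) eps)) as [N HN].
  { exists (mkposreal eps He). auto. }
  exists N. specialize (HN N (le_n N)). apply ballR in HN.
  rewrite sum_n_Reals in HN.
  pose proof (Series_incr_n (fun k => cc mu k * B ^ k) (S N) ltac:(lia) (PS_ex mu B Hm)).
  simpl (Nat.pred (S N)) in H.
  apply Rabs_lt_between in HN. unfold minus, plus, opp in HN; simpl in HN. lra.
Qed.

Lemma exp_partial x n : 0 <= x -> sum_f_R0 (fun k => x ^ k / INR (Factorial.fact k)) n <= exp x.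
Proof.
  intros Hx. pose proof (is_exp_Reals x) as H.
  assert (E : exp x = Series (fun k => x ^ k * / INR (Factorial.fact k))).
  { symmetry. apply is_series_unique. exact H. }
  assert (Hex : ex_series (fun k => x ^ k * / INR (Factorial.fact k))) by (eexists; exact H).
  rewrite E, (Series_incr_n _ (S n)) by (auto; lia). simpl (Nat.pred (S n)).
  assert (0 <= Series (fun k => x ^ (S n + k) * / INR (Factorial.fact (S n + k)))).
  { apply Series_nonneg. intros k. apply Rmult_le_pos. apply pow_le; lra.
    left; apply Rinv_0_lt_compat, fact_pos.
    apply (ex_series_incr_n (fun k => x ^ k * / INR (Factorial.fact k)) (S n)); auto. }
  unfold Rdiv. lra.
Qed.

Lemma cc_posarg mu k : 0 < INR k + mu -> cc mu k = / (INR (Factorial.fact k) * Gamma_pos (INR k + mu)).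
Proof.
  intros Hk. unfold cc. rewrite rgamma_pos by lra.
  replace (INR k + (mu - 1) + 1) with (INR k + mu) by ring.
  pose proof (fact_pos k). pose proof (Gamma_pos_gt0 (INR k + mu) Hk).
  field. split; lra.
Qed.

Definition term mu x k t := gam mu t * (cc mu k * (x * t) ^ k).

Lemma term_eq mu x k t : 0 < t -> term mu x k t = (cc mu k * x ^ k) * gam (INR k + mu) t.
Proof.
  intros Ht. unfold term, gam. replace (INR k + mu - 1) with (INR k + (mu - 1)) by ring.
  rewrite Rpower_plus, Rpower_pow by auto. rewrite Rpow_mult_distr. ring.
Qed.

Lemma exRR_ext (f g : R -> R) a b : (forall x, Rmin a b < x < Rmax a b -> f x = g x) -> ex_RInt f a b -> ex_RInt g a b.
Proof. apply (@ex_RInt_ext R_NormedModule). Qed.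

Lemma term_int mu x y b k : -1 < mu -> 0 < x -> 0 < y -> y <= b ->
  ex_RInt (term mu x k) y b /\ RInt (term mu x k) y b <= x ^ k / INR (Factorial.fact k).
Proof.
  intros Hm Hx Hy Hb.
  assert (Hext : forall t, Rmin y b < t < Rmax y b -> scal (cc mu k * x ^ k) (gam (INR k + mu) t) = term mu x k t).
  { intros t Ht. rewrite Rmin_left in Ht by lra. rewrite term_eq by lra. reflexivity. }
  assert (Hg : ex_RInt (gam (INR k + mu)) y b) by (apply gam_ex; lra).
  split.
  - eapply exRR_ext. exact Hext. apply (@ex_RInt_scal R_NormedModule). auto.
  - rewrite <- (RInt_ext _ _ _ _ Hext). rewrite (@RInt_scal R_CompleteNormedModule) by auto.
    unfold scal; simpl; unfold mult; simpl.
    pose proof (fact_pos k).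
    assert (HI : 0 <= RInt (gam (INR k + mu)) y b).
    { apply RInt_ge_0; auto. intros; left; apply gam_pos; lra. }
    destruct (Rlt_or_le 0 (INR k + mu)) as [Hp|Hn].
    + rewrite cc_posarg by auto.
      destruct (Gamma_facts _ Hp) as [HG _].
      pose proof (HG y b Hy Hb). pose proof (Gamma_pos_gt0 _ Hp).
      assert (0 < x ^ k) by (apply pow_lt; auto).
      rewrite Rinv_mult.
      apply Rle_trans with (/ INR (Factorial.fact k) * / Gamma_pos (INR k + mu) * x ^ k * Gamma_pos (INR k + mu)).
      * assert (0 < / INR (Factorial.fact k)) by (apply Rinv_0_lt_compat; auto).
        assert (0 < / Gamma_pos (INR k + mu)) by (apply Rinv_0_lt_compat; auto).
        apply Rmult_le_compat_l; [|auto]. left. repeat apply Rmult_lt_0_compat; auto.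
      * right. field. split; lra.
    + destruct k as [|k].
      * simpl in Hn. rewrite cc0_neg by lra. simpl.
        pose proof (Gamma_pos_gt0 (mu + 1) ltac:(lra)).
        assert (mu / Gamma_pos (mu + 1) <= 0).
        { unfold Rdiv. assert (0 < / Gamma_pos (mu + 1)) by (apply Rinv_0_lt_compat; auto). nra. }
        simpl in HI. assert (mu / Gamma_pos (mu + 1) * 1 * RInt (gam (0 + mu)) y b <= 0) by nra.
        unfold Rdiv at 2. rewrite Rinv_1. lra.
      * rewrite S_INR in Hn. pose proof (pos_INR k). lra.
Qed.

Definition Hn mu x n t := gam mu t * sum_f_R0 (fun k => cc mu k * (x * t) ^ k) n.

Lemma Hn_int mu x y b n : -1 < mu -> 0 < x -> 0 < y -> y <= b ->
  ex_RInt (Hn mu x n) y b /\ RInt (Hn mu x n) y b <= sum_f_R0 (fun k => x ^ k / INR (Factorial.fact k)) n.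
Proof.
  intros Hm Hx Hy Hb. induction n as [|n IH].
  - destruct (term_int mu x y b 0 Hm Hx Hy Hb) as [h1 h2].
    assert (E : forall t, Hn mu x 0 t = term mu x 0 t) by (intros; reflexivity).
    split.
    + eapply exRR_ext. intros t _; symmetry; apply E. exact h1.
    + rewrite (RInt_ext _ (term mu x 0)) by (intros; apply E). simpl. simpl in h2. exact h2.
  - destruct IH as [e1 b1]. destruct (term_int mu x y b (S n) Hm Hx Hy Hb) as [e2 b2].
    assert (E : forall t, plus (Hn mu x n t) (term mu x (S n) t) = Hn mu x (S n) t).
    { intros. unfold Hn, term. simpl. unfold plus; simpl. ring. }
    split.
    + eapply exRR_ext. intros; apply E. apply (@ex_RInt_plus R_NormedModule); auto.
    + rewrite <- (RInt_ext _ _ _ _ (fun t _ => E t)). rewrite (@RInt_plus R_CompleteNormedModule) by auto.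
      change (sum_f_R0 (fun k => x ^ k / INR (Factorial.fact k)) (S n)) with (sum_f_R0 (fun k => x ^ k / INR (Factorial.fact k)) n + x ^ S n / INR (Factorial.fact (S n))). change plus with Rplus. lra.
Qed.

Definition G mu x t := gam mu t * PSeries (cc mu) (x * t).

Lemma G_cont mu x t : -1 < mu -> 0 < t -> continuous (G mu x) t.
Proof.
  intros Hm Ht.
  apply (continuous_mult (gam mu) (fun t => PSeries (cc mu) (x * t))).
  apply gam_cont; auto.
  apply (continuous_comp (fun t => x * t) (PSeries (cc mu))).
  apply (@ex_derive_continuous R_AbsRing R_NormedModule). auto_derive. auto.
  apply PS_cont; auto.
Qed.

Lemma G_ex mu x u v : -1 < mu -> 0 < u -> 0 < v -> ex_RInt (G mu x) u v.
Proof.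
  intros. apply exR_cont. intros z Hz. apply G_cont; auto.
  assert (0 < Rmin u v) by (apply Rmin_glb_lt; auto). lra.
Qed.

Lemma G_pos mu x t : -1 < mu -> 0 < t -> 0 < x * t -> (0 < mu \/ - mu <= x * t) -> 0 < G mu x t.
Proof.
  intros. unfold G. apply Rmult_lt_0_compat. apply gam_pos; auto. apply PS_pos; auto.
Qed.

Lemma G_bound mu x y b : -1 < mu -> 0 < x -> 0 < y -> y <= b -> RInt (G mu x) y b <= exp x.
Proof.
  intros Hm Hx Hy Hb.
  destruct (Rle_lt_dec (RInt (G mu x) y b) (exp x)) as [h|h]; auto. exfalso.
  set (d := RInt (G mu x) y b - exp x).
  set (I0 := RInt (gam mu) y b).
  assert (HI0 : 0 <= I0) by (apply RInt_ge_0; auto; [apply gam_ex; lra| intros; left; apply gam_pos; lra]).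
  set (eps := d / (I0 + 1)).
  assert (He : 0 < eps) by (apply Rdiv_lt_0_compat; unfold d; lra).
  destruct (tail_small mu (x * b) eps Hm He) as [N HN].
  set (T := Series (fun k => cc mu (S N + k) * (x * b) ^ (S N + k))) in HN.
  assert (HT : 0 <= T) by (apply tail_nonneg; auto; nra).
  destruct (Hn_int mu x y b N Hm Hx Hy Hb) as [e1 b1].
  assert (Hg : ex_RInt (gam mu) y b) by (apply gam_ex; lra).
  assert (e2 : ex_RInt (fun t => scal T (gam mu t)) y b) by (apply (@ex_RInt_scal R_NormedModule); auto).
  assert (Hle : RInt (G mu x) y b <= RInt (fun t => plus (Hn mu x N t) (scal T (gam mu t))) y b).
  { apply RInt_le; auto. apply G_ex; lra. apply (@ex_RInt_plus R_NormedModule); auto.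
    intros t Ht. unfold G, Hn. rewrite (PS_split mu (x * t) N Hm).
    pose proof (tail_mono mu (x * t) (x * b) N Hm ltac:(split; nra)). fold T in H.
    pose proof (gam_pos mu t ltac:(lra)).
    set (tl := Series (fun k => cc mu (S N + k) * (x * t) ^ (S N + k))) in *.
    set (Sm := sum_f_R0 (fun k => cc mu k * (x * t) ^ k) N).
    assert (Hi : gam mu t * (Sm + tl) <= gam mu t * Sm + T * gam mu t) by nra.
    exact Hi. }
  rewrite (@RInt_plus R_CompleteNormedModule) in Hle by auto.
  rewrite (@RInt_scal R_CompleteNormedModule) in Hle by auto.
  unfold plus, scal in Hle; simpl in Hle; unfold mult in Hle; simpl in Hle. fold I0 in Hle.
  pose proof (exp_partial x N ltac:(lra)).
  assert (T * I0 <= eps * I0) by nra.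
  assert (eps * I0 < d).
  { unfold eps. unfold Rdiv. apply Rmult_lt_reg_r with (I0 + 1). lra.
    field_simplify; try lra. unfold d; nra. }
  unfold d in *. lra.
Qed.

Lemma F_eq mu x t : 0 < x -> 0 < t ->
  Rpower t ((mu - 1) / 2) * exp (- t - x) * BesselI (mu - 1) (2 * sqrt (x * t)) =
  (Rpower x ((mu - 1) / 2) * exp (- x)) * G mu x t.
Proof.
  intros Hx Ht. assert (Hw : 0 < x * t) by nra.
  unfold BesselI, G.
  replace (2 * sqrt (x * t) / 2) with (sqrt (x * t)) by field.
  assert (ES : Series (fun k => sqrt (x * t) ^ (2 * k) / INR (Factorial.fact k) * rgamma (INR k + (mu - 1) + 1))
               = PSeries (cc mu) (x * t)).
  { rewrite PS_eq. apply Series_ext. intros k. rewrite pow_mult, pow2_sqrt by lra.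
    unfold cc, Rdiv. ring. }
  rewrite ES. clear ES.
  rewrite <- (Rpower_sqrt (x * t)) by auto. rewrite Rpower_mult.
  unfold gam, Rpower. rewrite ln_mult by auto.
  set (P := PSeries (cc mu) (x * t)).
  assert (A1 : exp ((mu - 1) / 2 * ln t) * exp (- t - x) * (exp (/ 2 * (mu - 1) * (ln x + ln t)) * P)
               = exp ((mu - 1) / 2 * ln t + (- t - x) + / 2 * (mu - 1) * (ln x + ln t)) * P)
    by (rewrite !exp_plus; ring).
  assert (A2 : exp ((mu - 1) / 2 * ln x) * exp (- x) * (exp ((mu - 1) * ln t) * exp (- t) * P)
               = exp ((mu - 1) / 2 * ln x + - x + ((mu - 1) * ln t + - t)) * P)
    by (rewrite !exp_plus; ring).
  rewrite A1, A2. f_equal. f_equal. field.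
Qed.

Lemma xy_bound y mu0 x : 0 < y -> -1 < mu0 < 0 -> 0 < x -> L_bound mu0 y <= x -> - mu0 <= x * y.
Proof.
  intros Hy Hm Hx HL. unfold L_bound in HL.
  assert (Hs : y - mu0 <= sqrt ((y - mu0 - 2) ^ 2 + 4 * y)).
  { replace (y - mu0) with (sqrt ((y - mu0) ^ 2)) at 1 by (apply sqrt_pow2; lra). apply sqrt_le_1_alt. assert ((y - mu0 - 2) ^ 2 + 4 * y - (y - mu0) ^ 2 = 4 + 4 * mu0) by ring. lra. }
  assert (sqrt ((y - mu0 - 2) ^ 2 + 4 * y) - y - mu0 <= x * (2 * y)).
  { apply Rmult_le_compat_r with (r := 2 * y) in HL; [|lra].
    unfold Rdiv in HL. rewrite Rmult_assoc, Rinv_l, Rmult_1_r in HL by lra. exact HL. }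
  lra.
Qed.

Theorem corollary1 (y mu0 x : R) :
  0 < y -> -1 < mu0 < 0 -> 0 < x -> L_bound mu0 y <= x ->
  forall mu : R, mu0 <= mu -> 0 < MarcumQ mu x y.
Proof.
  intros Hy Hm0 Hx HL mu Hmu.
  pose proof (xy_bound y mu0 x Hy Hm0 Hx HL) as Hxy.
  assert (Hm : -1 < mu) by lra.
  assert (Hc : forall t, y <= t -> 0 < mu \/ - mu <= x * t).
  { intros t Ht. destruct (Rlt_or_le 0 mu); [left; auto| right]. nra. }
  destruct (improper_point (G mu x) y (exp x)) as (l & Hl & Hle).
  - intros t Ht. left. apply G_pos; [auto | lra | nra | apply Hc; lra].
  - intros u v Hu Hv. apply G_ex; lra.
  - intros v Hv. apply G_bound; auto.
  - assert (Hlpos : 0 < l).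
    { apply Rlt_le_trans with (RInt (G mu x) y (y + 1)); [|apply Hle; lra].
      apply RInt_gt_0. lra.
      intros t Ht. apply G_pos; [auto | lra | nra | apply Hc; lra].
      intros t Ht. apply G_cont; auto; lra. }
    set (K := Rpower x ((mu - 1) / 2) * exp (- x)).
    assert (HK : 0 < K) by (unfold K, Rpower; apply Rmult_lt_0_compat; apply exp_pos).
    assert (Hs : is_RInt_gen (fun t => scal K (G mu x t)) (at_point y) (Rbar_locally p_infty) (scal K l)).
    { apply (@is_RInt_gen_scal R_NormedModule). apply (@filter_filter _ _ (at_point_filter y)). apply (@filter_filter _ _ (Rbar_locally_filter p_infty)). exact Hl. }
    assert (Hs2 : is_RInt_gen (fun t => Rpower t ((mu - 1) / 2) * exp (- t - x)
                     * BesselI (mu - 1) (2 * sqrt (x * t))) (at_point y) (Rbar_locally p_infty) (scal K l)).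
    { eapply (@is_RInt_gen_ext R_NormedModule); [apply (@filter_filter _ _ (at_point_filter y)) | apply (@filter_filter _ _ (Rbar_locally_filter p_infty)) | | exact Hs].
      apply (Filter_prod _ _ _ (fun a => a = y) (fun b => y < b)).
      - reflexivity.
      - exists y. auto.
      - intros a b Ha Hb t Ht. simpl in Ht. subst a. rewrite Rmin_left, Rmax_right in Ht by lra.
        rewrite F_eq by lra. reflexivity. }
    unfold MarcumQ.
    rewrite ((@is_RInt_gen_unique R_CompleteNormedModule) _ _ _ _ _ _ Hs2).
    unfold scal; simpl; unfold mult; simpl.
    assert (0 < Rpower x ((1 - mu) / 2)) by (unfold Rpower; apply exp_pos).
    apply Rmult_lt_0_compat; auto. apply Rmult_lt_0_compat; auto.
Qed.
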